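(* Let $\mathbf{a}$ be a centered symplectic cellular automaton (CSCA) and let $\xi=(\xi_+,\xi_-)\in\mathcal{P}^2$ be a non-zero phase space vector with $\mathbf{a}\xi=u^n\xi$ for some $n\in\mathbb{N}$. Then: (1) $\mathbf{a}\bar\xi=u^{-n}\bar\xi$; (2) $\mathbf{a}$ is uniquely given by $$\mathbf{a}_{11}=\frac{u^n\xi_+\bar\xi_-+u^{-n}\bar\xi_+\xi_-}{\xi\wedge\bar\xi},\quad \mathbf{a}_{12}=\frac{(u^n+u^{-n})\xi_+\bar\xi_+}{\xi\wedge\bar\xi},\quad \mathbf{a}_{21}=\frac{(u^n+u^{-n})\xi_-\bar\xi_-}{\xi\wedge\bar\xi},\quad \mathbf{a}_{22}=\frac{u^{-n}\xi_+\bar\xi_-+u^{n}\bar\xi_+\xi_-}{\xi\wedge\bar\xi};$$ (3) $\mathrm{tr}\,\mathbf{a}=u^{-n}+u^n$; (4) every glider of $\mathbf{a}$ is a multiple (by an element of $\mathcal{P}$) of $$\left(\frac{\mathbf{a}_{12}}{\gcd(u^n+\mathbf{a}_{11},\mathbf{a}_{12})},\ \frac{u^n+\mathbf{a}_{11}}{\gcd(u^n+\mathbf{a}_{11},\mathbf{a}_{12})}\right)\quad\text{or of}\quad \left(\frac{\mathbf{a}_{12}}{\gcd(u^{-n}+\mathbf{a}_{11},\mathbf{a}_{12})},\ \frac{u^{-n}+\mathbf{a}_{11}}{\gcd(u^{-n}+\mathbf{a}_{11},\mathbf{a}_{12})}\right).$$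
   Context: $\mathcal{P}$ denotes the ring of Laurent polynomials in a variable $u$ over the field $\mathbb{Z}_2$ (all arithmetic mod 2). For $p\in\mathcal{P}$, $\bar p$ denotes the involution $p(u)\mapsto p(u^{-1})$; for vectors and matrices it is applied entrywise. $\mathcal{R}\subset\mathcal{P}$ is the subring of palindromes, $\bar p=p$. A centered symplectic cellular automaton (CSCA) is a $2\times 2$ matrix with entries in $\mathcal{R}$ and determinant $1$, acting on column vectors $\xi=(\xi_+,\xi_-)^T\in\mathcal{P}^2$ (phase space vectors, which label tensor products of Pauli matrices on a spin chain). A glider of $\mathbf{a}$ is a non-zero $\xi\in\mathcal{P}^2$ with $\mathbf{a}\xi=u^k\xi$ for some integer $k$. The wedge product is $\xi\wedge\eta=\xi_+\eta_-+\eta_+\xi_-$. *)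

(* Defs.v *)
From HB Require Import structures.
From mathcomp Require Import all_boot all_order all_algebra.
Set Implicit Arguments. Unset Strict Implicit. Unset Printing Implicit Defensive.
Import Order.TTheory GRing.Theory.
Local Open Scope ring_scope.

(* Polynomials over Z_2 and their fraction field Z_2(u).
   The ring of Laurent polynomials P is realized as the subring of
   Z_2(u) of elements of the form p(u) / u^k (predicate [laurent]). *)
Definition F2 := 'F_2.
Definition Frac := {fraction {poly F2}}.

Definition u : Frac := tofrac ('X : {poly F2}).

Definition laurent (x : Frac) : Prop :=
  exists (p : {poly F2}) (k : nat), x = tofrac p / u ^+ k.

(* the involution u |-> u^{-1}: on polynomials p(u) |-> p(u^{-1}),
   extended to the fraction field by applying it to numerator and
   denominator of (a representative of) the fraction. *)
Definition barP (p : {poly F2}) : Frac := (map_poly (fun c : F2 => tofrac (c%:P)) p).[u^-1].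
Definition bar (x : Frac) : Frac :=
  barP (\n_(repr x)) / barP (\d_(repr x)).

Definition palindrome (x : Frac) : Prop := laurent x /\ bar x = x.

Definition phase (xi : 'cV[Frac]_2) : Prop := forall i, laurent (xi i 0).
Definition xplus (xi : 'cV[Frac]_2) : Frac := xi 0 0.
Definition xminus (xi : 'cV[Frac]_2) : Frac := xi 1 0.
Definition barv (xi : 'cV[Frac]_2) : 'cV[Frac]_2 := map_mx bar xi.

Definition CSCA (a : 'M[Frac]_2) : Prop :=
  (forall i j, palindrome (a i j)) /\ \det a = 1.

Definition wedge (xi eta : 'cV[Frac]_2) : Frac :=
  xplus xi * xminus eta + xplus eta * xminus xi.

Definition glider (a : 'M[Frac]_2) (xi : 'cV[Frac]_2) : Prop :=
  phase xi /\ xi != 0 /\ exists k : int, a *m xi = (u ^ k) *: xi.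

(* divisibility and gcd in the ring P of Laurent polynomials
   (a gcd is determined up to a unit of P) *)
Definition ldvd (d x : Frac) : Prop := exists c, laurent c /\ x = c * d.
Definition is_lgcd (g x y : Frac) : Prop :=
  laurent g /\ ldvd g x /\ ldvd g y /\
  forall d, laurent d -> ldvd d x -> ldvd d y -> ldvd d g.

Definition vec2 (x y : Frac) : 'cV[Frac]_2 :=
  \col_i (if i == 0 then x else y).

Definition lmultiple (eta v : 'cV[Frac]_2) : Prop :=
  exists c, laurent c /\ eta = c *: v.

(* Main.v *)
Require Import Defs.
From HB Require Import structures.
From mathcomp Require Import all_boot all_order all_algebra.
From mathcomp Require Import ring zify.
Import GRing.Theory.
Local Open Scope ring_scope.

Lemma barPE p : barP p = (map_poly ((@tofrac {poly F2}) \o polyC) p).[u^-1].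
Proof. by []. Qed.
Lemma barPM p q : barP (p * q) = barP p * barP q.
Proof. by rewrite !barPE rmorphM hornerM. Qed.
Lemma barPD p q : barP (p + q) = barP p + barP q.
Proof. by rewrite !barPE rmorphD hornerD. Qed.
Lemma barP1 : barP 1 = 1.
Proof. by rewrite !barPE rmorph1 hornerC. Qed.
Lemma barPX : barP 'X = u^-1.
Proof. by rewrite !barPE map_polyX hornerX. Qed.
Lemma u_neq0 : u != 0.
Proof. by rewrite /u tofrac_eq0 polyX_eq0. Qed.

Lemma natA a b : (a < b)%N -> (b.-1 - (b - a.+1))%N = a.
Proof. case: b => // b /=; lia. Qed.
Lemma natB a b : (a < b)%N -> b.-1 = ((b - a.+1) + a)%N.
Proof. case: b => // b /=; lia. Qed.

Lemma barP_neq0 p : p != 0 -> barP p != 0.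
Proof.
move=> p0; set s := size p.
have s0 : (0 < s)%N by rewrite size_poly_gt0.
have key : u ^+ s.-1 * barP p = tofrac (\poly_(i < s) p`_(s.-1 - i)).
  rewrite barPE horner_coef size_map_poly mulr_sumr poly_def rmorph_sum.
  rewrite [RHS](reindex_inj rev_ord_inj) /=.
  apply: eq_bigr => i _.
  have hi := ltn_ord i.
  have -> : (s.-1 - (s - i.+1) = i)%N by exact: natA.
  rewrite coef_map /= -mul_polyC !rmorphM rmorphXn /= -/u.
  have -> : (s.-1 = (s - i.+1) + i)%N by exact: natB.
  rewrite exprD exprVn -mulrA [in RHS]mulrC; congr (_ * _).
  by rewrite mulrA mulrC mulrA mulVf ?mul1r // expf_neq0 // u_neq0.
apply/negP => /eqP h.
have : tofrac (\poly_(i < s) p`_(s.-1 - i)) = 0 by rewrite -key h mulr0.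
move=> /eqP; rewrite tofrac_eq0 => /eqP hq.
have := congr1 (fun q : {poly F2} => q`_0) hq.
rewrite /= coef_poly s0 subn0 coef0 -lead_coefE => /eqP; rewrite lead_coef_eq0.
by apply/negP.
Qed.

Lemma frac_repr (x : Frac) : x = tofrac (\n_(repr x)) / tofrac (\d_(repr x)).
Proof.
have dn : \d_(repr x) != 0 := denom_ratioP _.
apply: (mulIf (_ : tofrac (\d_(repr x)) != 0)); first by rewrite tofrac_eq0.
rewrite divfK ?tofrac_eq0 //.
have e := reprK x; set r := repr x in e *; rewrite -{1}e.
unlock tofrac.
transitivity ((\pi_Frac)%qT (FracField.mulf r (Ratio (\d_r) 1))).
  by rewrite FracField.pi_mul.
apply/eqP; rewrite eqmodE /=.
rewrite FracField.equivfE /FracField.mulf !numden_Ratio ?oner_eq0 ?mulf_neq0 //.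
- by apply/eqP; ring.
- exact: oner_neq0.
- exact: oner_neq0.
Qed.

Lemma fracE (x : Frac) : exists p q, q != 0 /\ x = tofrac p / tofrac q.
Proof. exists (\n_(repr x)), (\d_(repr x)); split; [exact: denom_ratioP | exact: frac_repr]. Qed.

Lemma tofrac_neq0 (p : {poly F2}) : p != 0 -> (tofrac p : Frac) != 0.
Proof. by rewrite tofrac_eq0. Qed.
Lemma tofrac_inj (p q : {poly F2}) : (tofrac p : Frac) = tofrac q -> p = q.
Proof. by move/eqP; rewrite tofrac_eq => /eqP. Qed.
Lemma bar_frac (p q : {poly F2}) : q != 0 -> bar (tofrac p / tofrac q) = barP p / barP q.
Proof.
move=> q0; rewrite /bar.
set x := tofrac p / tofrac q.
have d0 : \d_(repr x) != 0 := denom_ratioP _.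
have ex := frac_repr x.
set n := \n_(repr x) in ex *. set d := \d_(repr x) in d0 ex *.
move: ex; rewrite /x => ex; clearbody n d; clear x.
have tq := @tofrac_neq0 q q0.
have td := @tofrac_neq0 d d0.
have e0 : tofrac p * tofrac d = tofrac n * tofrac q :> Frac.
  by rewrite -(divfK tq (tofrac p)) ex mulrAC divfK.
move: e0; rewrite -!tofracM => /tofrac_inj e. have e' := congr1 barP e.
rewrite !barPM in e'.
have bq := @barP_neq0 q q0. have bd := @barP_neq0 d d0.
apply/eqP. rewrite (eqr_div _ _ bd bq). by rewrite e'.
Qed.


Lemma bar_tofrac p : bar (tofrac p) = barP p.
Proof.
have h := @bar_frac p 1 (oner_neq0 _).
by rewrite tofrac1 divr1 in h; rewrite h barP1 divr1.
Qed.

Lemma barM x y : bar (x * y) = bar x * bar y.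
Proof.
case: (fracE x) => p1 [q1 [q10 ->]]; case: (fracE y) => p2 [q2 [q20 ->]].
rewrite mulf_div -!tofracM (bar_frac _ _ (mulf_neq0 q10 q20)) (bar_frac _ _ q10) (bar_frac _ _ q20) !barPM.
by rewrite mulf_div.
Qed.

Lemma barD x y : bar (x + y) = bar x + bar y.
Proof.
case: (fracE x) => p1 [q1 [q10 ->]]; case: (fracE y) => p2 [q2 [q20 ->]].
have t1 := @tofrac_neq0 q1 q10. have t2 := @tofrac_neq0 q2 q20.
have b1 := @barP_neq0 q1 q10. have b2 := @barP_neq0 q2 q20.
rewrite (addf_div _ _ t1 t2) -!tofracM -tofracD (bar_frac _ _ (mulf_neq0 q10 q20)) (bar_frac _ _ q10) (bar_frac _ _ q20).
by rewrite (addf_div _ _ b1 b2) barPD !barPM.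
Qed.

Lemma bar1 : bar 1 = 1.
Proof. by rewrite -tofrac1 bar_tofrac barP1. Qed.
Lemma bar0 : bar 0 = 0.
Proof. by rewrite -tofrac0 bar_tofrac barPE rmorph0 horner0. Qed.
Lemma baru : bar u = u^-1.
Proof. by rewrite /u bar_tofrac barPX. Qed.
Lemma barX x n : bar (x ^+ n) = bar x ^+ n.
Proof. elim: n => [|n IH]; first by rewrite !expr0 bar1. by rewrite !exprS barM IH. Qed.
Lemma bar_eq0 x : bar x = 0 -> x = 0.
Proof.
case: (fracE x) => p [q [q0 ->]]; rewrite (bar_frac _ _ q0).
have [->|p0] := eqVneq p 0; first by rewrite rmorph0 mul0r.
move/eqP; rewrite mulf_eq0 invr_eq0 (negPf (@barP_neq0 p p0)) (negPf (@barP_neq0 q q0)).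
by [].
Qed.

Lemma two0 : (2 : Frac) = 0.
Proof.
have -> : (2 : Frac) = tofrac (2%:R : {poly F2}) by rewrite rmorph_nat.
have h : (2%:R : F2) = 0 by apply/val_inj.
by rewrite -polyC_natr h polyC0 rmorph0.
Qed.
Lemma oppF (x : Frac) : - x = x.
Proof. by apply/eqP; rewrite eq_sym -addr_eq0 -mulr2n -mulr_natl two0 mul0r. Qed.
Lemma ord2 (i : 'I_2) : i = 0 \/ i = 1.
Proof. case: i => [[|[|k]]] hk; [left|right|by []]; exact: val_inj. Qed.
Lemma lift01 : lift ord0 (ord0 : 'I_1) = 1 :> 'I_2.
Proof. exact: val_inj. Qed.
Lemma mulmx2 (A : 'M[Frac]_2) (v : 'cV[Frac]_2) i : (A *m v) i 0 = A i 0 * v 0 0 + A i 1 * v 1 0.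
Proof. by rewrite mxE !big_ord_recl big_ord0 addr0 lift01. Qed.
Lemma tr2 (A : 'M[Frac]_2) : \tr A = A 0 0 + A 1 1.
Proof. by rewrite /mxtrace !big_ord_recl big_ord0 addr0 lift01. Qed.
Lemma det2 (A : 'M[Frac]_2) : \det A = A 0 0 * A 1 1 - A 0 1 * A 1 0.
Proof.
rewrite (expand_det_row _ 0) !big_ord_recl big_ord0 addr0 /cofactor !det_mx11 !mxE /=.
have -> : lift 0 (0 : 'I_1) = 1 :> 'I_2 by apply/val_inj.
have -> : lift 1 (0 : 'I_1) = 0 :> 'I_2 by apply/val_inj.
rewrite /bump /= expr0 expr1; ring.
Qed.



Lemma laurent_tofrac p : laurent (tofrac p).
Proof. by exists p, 0%N; rewrite expr0 invr1 mulr1. Qed.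
Lemma laurent_uX k : laurent (u ^+ k).
Proof. by exists ('X^k), 0%N; rewrite expr0 invr1 mulr1 tofracXn. Qed.
Lemma laurent_uN k : laurent (u ^- k).
Proof. by exists 1, k; rewrite tofrac1 mul1r. Qed.
Lemma laurent1 : laurent 1.
Proof. by rewrite -tofrac1; apply: laurent_tofrac. Qed.
Lemma laurentM x y : laurent x -> laurent y -> laurent (x * y).
Proof.
move=> [p [i ->]] [q [j ->]]; exists (p * q), (i + j)%N.
by rewrite mulf_div tofracM exprD.
Qed.
Arguments laurentM {x y}.
Lemma laurentD x y : laurent x -> laurent y -> laurent (x + y).
Proof.
move=> [p [i ->]] [q [j ->]]; exists (p * 'X^j + q * 'X^i), (i + j)%N.
have ui : u ^+ i != 0 := expf_neq0 _ u_neq0.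
have uj : u ^+ j != 0 := expf_neq0 _ u_neq0.
by rewrite (addf_div _ _ ui uj) tofracD !tofracM !tofracXn exprD.
Qed.
Arguments laurentD {x y}.
Lemma laurent_inv_const (c : F2) : c != 0 -> laurent (tofrac (c%:P))^-1.
Proof.
move=> c0.
have cp : c%:P != 0 by rewrite polyC_eq0.
have tc := @tofrac_neq0 _ cp.
have h : tofrac (c%:P) * tofrac ((c^-1)%:P) = 1 :> Frac.
  by rewrite -tofracM -polyCM (mulfV c0) tofrac1.
have -> : (tofrac (c%:P))^-1 = tofrac ((c^-1)%:P) :> Frac.
  by rewrite -[LHS]mulr1 -h (mulKf tc).
exact: laurent_tofrac.
Qed.
Lemma bezout_laurent x y : laurent x -> laurent y ->
  (forall d, laurent d -> ldvd d x -> ldvd d y -> ldvd d 1) ->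
  exists al be, [/\ laurent al, laurent be & al * x + be * y = 1].
Proof.
move=> [X [i ex]] [Y [j ey]] H.
set G := gcdp X Y.
have ui : u ^+ i != 0 := expf_neq0 _ u_neq0.
have uj : u ^+ j != 0 := expf_neq0 _ u_neq0.
have hX : tofrac X = tofrac (X %/ G) * tofrac G :> Frac by rewrite -tofracM (divpK (dvdp_gcdl X Y)).
have hY : tofrac Y = tofrac (Y %/ G) * tofrac G :> Frac by rewrite -tofracM (divpK (dvdp_gcdr X Y)).
have dx : ldvd (tofrac G) x.
  exists (tofrac (X %/ G) / u ^+ i); split; first by apply: laurentM; [apply: laurent_tofrac | apply: laurent_uN].
  by rewrite ex hX mulrAC.
have dy : ldvd (tofrac G) y.
  exists (tofrac (Y %/ G) / u ^+ j); split; first by apply: laurentM; [apply: laurent_tofrac | apply: laurent_uN].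
  by rewrite ey hY mulrAC.
have [c [lc e1]] := H _ (laurent_tofrac G) dx dy.
have [[A B] hAB] := Bezoutp X Y.
case/eqpP: hAB => [[c1 c2] /andP [c10 c20] /= hc].
have hc' := congr1 (@tofrac _) hc.
rewrite -!mul_polyC !tofracM tofracD !tofracM in hc'.
have tX : tofrac X = x * u ^+ i by rewrite ex (divfK ui).
have tY : tofrac Y = y * u ^+ j by rewrite ey (divfK uj).
have c2p : c2%:P != 0 by rewrite polyC_eq0.
have tc2 := @tofrac_neq0 _ c2p.
exists (c * (tofrac c2%:P)^-1 * tofrac c1%:P * tofrac A * u ^+ i).
exists (c * (tofrac c2%:P)^-1 * tofrac c1%:P * tofrac B * u ^+ j).
split.
- apply: laurentM; [apply: laurentM; [apply: laurentM; [apply: laurentM; [exact: lc | exact: laurent_inv_const] | exact: laurent_tofrac] | exact: laurent_tofrac] | exact: laurent_uX].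
- apply: laurentM; [apply: laurentM; [apply: laurentM; [apply: laurentM; [exact: lc | exact: laurent_inv_const] | exact: laurent_tofrac] | exact: laurent_tofrac] | exact: laurent_uX].
transitivity (c * ((tofrac c2%:P)^-1 * (tofrac c1%:P * (tofrac A * (x * u ^+ i) + tofrac B * (y * u ^+ j))))).
  ring.
rewrite -tX -tY hc' (mulKf tc2).
exact: esym e1.
Qed.

Lemma aux_cx (e1 e2 v1 v2 g : Frac) : g != 0 -> v2 != 0 -> e1 * v2 = v1 * e2 ->
  e2 / (v2 / g) * (v1 / g) = e1.
Proof.
move=> g0 v20 he.
rewrite invf_div.
transitivity (e2 * v1 * (g / g) / v2); first ring.
rewrite (divff g0) mulr1 -[RHS](mulfK v20) he; ring.
Qed.

Lemma glider_mult (v1 v2 g : Frac) (eta : 'cV[Frac]_2) :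
  v2 != 0 -> is_lgcd g v2 v1 -> phase eta -> eta 0 0 * v2 = v1 * eta 1 0 ->
  lmultiple eta (vec2 (v1 / g) (v2 / g)).
Proof.
move=> v20 [lg [[c2 [lc2 ec2]] [[c1 [lc1 ec1]] Hg]]] ph he.
have g0 : g != 0.
  apply: contra v20 => /eqP g0; by rewrite ec2 g0 mulr0 eqxx.
set x := v1 / g; set y := v2 / g.
have xE : x = c1 by rewrite /x ec1 (mulfK g0).
have yE : y = c2 by rewrite /y ec2 (mulfK g0).
have y0 : y != 0 := mulf_neq0 v20 (invr_neq0 g0).
have cop : forall d, laurent d -> ldvd d x -> ldvd d y -> ldvd d 1.
  move=> d ld [a1 [la1 ha1]] [a2 [la2 ha2]].
  have : ldvd (d * g) g.
    apply: Hg; first exact: laurentM ld lg.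
    + exists a2; split; first exact: la2.
      by rewrite -(divfK g0 v2) -/y ha2 mulrA.
    + exists a1; split; first exact: la1.
      by rewrite -(divfK g0 v1) -/x ha1 mulrA.
  case=> e [le he']; exists e; split; first exact: le.
  apply/eqP; rewrite -(can_eq (mulfK g0)) mul1r -mulrA -he'; exact: eqxx.
have lx : laurent x by rewrite xE.
have ly : laurent y by rewrite yE.
have [al [be [lal lbe hab]]] := bezout_laurent _ _ lx ly cop.
set e1 := eta 0 0; set e2 := eta 1 0.
set c := e2 / y.
have cy : c * y = e2 by rewrite /c (divfK y0).
have cx : c * x = e1 := aux_cx _ _ _ _ _ g0 v20 he.
exists c; split.
  have -> : c = al * (c * x) + be * (c * y) by rewrite -[LHS]mulr1 -hab; ring.
  rewrite cx cy; apply: laurentD; apply: laurentM; try exact: lal; try exact: lbe.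
  exact: (ph 0). exact: (ph 1).
apply/matrixP => i j; rewrite (ord1 j) !mxE.
case: (ord2 i) => -> /=.
  by rewrite cx.
by rewrite cy.
Qed.



Theorem mainTheorem1 (a : 'M[Frac]_2) (xi : 'cV[Frac]_2) (n : nat) :
  CSCA a -> phase xi -> xi != 0 -> (0 < n)%N ->
  a *m xi = u ^+ n *: xi ->
  let xp := xplus xi in let xm := xminus xi in
  let bp := bar (xplus xi) in let bm := bar (xminus xi) in
  let w := wedge xi (barv xi) in
  (* (1) *)
  a *m barv xi = u ^- n *: barv xi /\
  (* (2) *)
  w != 0 /\
  a 0 0 = (u ^+ n * xp * bm + u ^- n * bp * xm) / w /\
  a 0 1 = (u ^+ n + u ^- n) * xp * bp / w /\
  a 1 0 = (u ^+ n + u ^- n) * xm * bm / w /\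
  a 1 1 = (u ^- n * xp * bm + u ^+ n * bp * xm) / w /\
  (* (3) *)
  \tr a = u ^- n + u ^+ n /\
  (* (4) *)
  (forall g1 g2 : Frac,
     is_lgcd g1 (u ^+ n + a 0 0) (a 0 1) ->
     is_lgcd g2 (u ^- n + a 0 0) (a 0 1) ->
     forall eta, glider a eta ->
       lmultiple eta (vec2 (a 0 1 / g1) ((u ^+ n + a 0 0) / g1)) \/
       lmultiple eta (vec2 (a 0 1 / g2) ((u ^- n + a 0 0) / g2))).
Proof.
move=> [pal det1] phx xi0 n0 E xp xm bp bm w.
have hu : u ^+ n != 0 := expf_neq0 _ u_neq0.
have hlm : u ^+ n * u ^- n = 1 := divff hu.
have hne : u ^+ n != u ^- n.
  apply/negP => /eqP h.
  have h2 : u ^+ (n + n) = 1 by rewrite exprD {2}h hlm.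
  move: h2; rewrite /u -tofracXn -tofrac1 => /tofrac_inj hX.
  have := congr1 (fun q : {poly F2} => size q) hX; rewrite /= size_polyXn size_poly1; lia.
have hsum : u ^+ n + u ^- n != 0.
  apply: contra hne => /eqP h; apply/eqP.
  by move/eqP: h; rewrite addr_eq0 oppF => /eqP.
have hb i j : bar (a i j) = a i j := (pal i j).2.
have barl : bar (u ^+ n) = u ^- n by rewrite barX baru exprVn.
have barm : bar (u ^- n) = u ^+ n.
  have h := congr1 bar hlm; rewrite barM bar1 barl in h.
  have hmn : u ^- n != 0 := invr_neq0 hu.
  by rewrite -[bar _]mul1r -(mulVf hmn) -mulrA h mulr1 invrK.
have Ei i : a i 0 * xi 0 0 + a i 1 * xi 1 0 = u ^+ n * xi i 0.
  by have := congr1 (fun M : 'M[Frac]_(2,1) => M i 0) E; rewrite /= mulmx2 mxE.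
have Ebi i : a i 0 * bar (xi 0 0) + a i 1 * bar (xi 1 0) = u ^- n * bar (xi i 0).
  by have := congr1 bar (Ei i); rewrite barD !barM !hb barl.
have E1 : a 0 0 * xp + a 0 1 * xm = u ^+ n * xp := Ei 0.
have E2 : a 1 0 * xp + a 1 1 * xm = u ^+ n * xm := Ei 1.
have E3 : a 0 0 * bp + a 0 1 * bm = u ^- n * bp := Ebi 0.
have E4 : a 1 0 * bp + a 1 1 * bm = u ^- n * bm := Ebi 1.
have hw : w = xp * bm + bp * xm by rewrite /w /wedge /xplus /xminus !mxE.
have P1 : a *m barv xi = u ^- n *: barv xi.
  apply/matrixP => i j; rewrite (ord1 j) mulmx2 !mxE; exact: Ebi.
have I1 : a 0 1 * w = (u ^+ n + u ^- n) * xp * bp.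
  rewrite hw; apply/eqP; rewrite -subr_eq0; apply/eqP.
  transitivity (bp * (a 0 0 * xp + a 0 1 * xm - u ^+ n * xp) + xp * (a 0 0 * bp + a 0 1 * bm - u ^- n * bp) - 2 * a 0 0 * xp * bp); first ring.
  rewrite E1 E3 two0; ring.
have I2 : a 0 0 * w = u ^+ n * xp * bm + u ^- n * bp * xm.
  rewrite hw; apply/eqP; rewrite -subr_eq0; apply/eqP.
  transitivity (bm * (a 0 0 * xp + a 0 1 * xm - u ^+ n * xp) + xm * (a 0 0 * bp + a 0 1 * bm - u ^- n * bp) - 2 * a 0 1 * xm * bm); first ring.
  rewrite E1 E3 two0; ring.
have I3 : a 1 1 * w = u ^- n * xp * bm + u ^+ n * bp * xm.
  rewrite hw; apply/eqP; rewrite -subr_eq0; apply/eqP.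
  transitivity (bp * (a 1 0 * xp + a 1 1 * xm - u ^+ n * xm) + xp * (a 1 0 * bp + a 1 1 * bm - u ^- n * bm) - 2 * a 1 0 * xp * bp); first ring.
  rewrite E2 E4 two0; ring.
have I4 : a 1 0 * w = (u ^+ n + u ^- n) * xm * bm.
  rewrite hw; apply/eqP; rewrite -subr_eq0; apply/eqP.
  transitivity (bm * (a 1 0 * xp + a 1 1 * xm - u ^+ n * xm) + xm * (a 1 0 * bp + a 1 1 * bm - u ^- n * bm) - 2 * a 1 1 * xm * bm); first ring.
  rewrite E2 E4 two0; ring.
have xi_nz : xp != 0 \/ xm != 0.
  case: (eqVneq xp 0) => [hp|hp]; last by left.
  case: (eqVneq xm 0) => [hm|hm]; last by right.
  exfalso; move/negP: xi0; apply; apply/eqP/matrixP => i j.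
  rewrite (ord1 j) !mxE; case: (ord2 i) => ->; [exact: hp | exact: hm].
have wn0 : w != 0.
  apply/negP => /eqP w0.
  case: xi_nz => [hp|hm].
  - have bp0 : bp != 0 by apply/negP => /eqP /bar_eq0 /eqP; apply/negP.
    move: I1; rewrite w0 mulr0 => /esym /eqP.
    rewrite -mulrA mulf_eq0 (negPf hsum) /= mulf_eq0 (negPf hp) (negPf bp0).
    by [].
  - have bm0 : bm != 0 by apply/negP => /eqP /bar_eq0 /eqP; apply/negP.
    move: I4; rewrite w0 mulr0 => /esym /eqP.
    rewrite -mulrA mulf_eq0 (negPf hsum) /= mulf_eq0 (negPf hm) (negPf bm0).
    by [].
have htr : \tr a = u ^- n + u ^+ n.
  rewrite tr2 -[a 0 0 + a 1 1](mulfK wn0) mulrDl I2 I3.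
  transitivity ((u ^- n + u ^+ n) * w / w); last exact: (mulfK wn0).
  rewrite hw; ring.
split; first exact: P1.
split; first exact: wn0.
split; first by rewrite -I2 (mulfK wn0).
split; first by rewrite -I1 (mulfK wn0).
split; first by rewrite -I4 (mulfK wn0).
split; first by rewrite -I3 (mulfK wn0).
split; first exact: htr.
have htr' : a 0 0 + a 1 1 = u ^- n + u ^+ n by rewrite -tr2.
have hdet : a 0 0 * a 1 1 - a 0 1 * a 1 0 = 1 by rewrite -det2.
move=> g1 g2 G1 G2 eta [pe [eta0 [k Ek]]].
have Fi i : a i 0 * eta 0 0 + a i 1 * eta 1 0 = u ^ k * eta i 0.
  by have := congr1 (fun M : 'M[Frac]_(2,1) => M i 0) Ek; rewrite /= mulmx2 mxE.
have F1 := Fi 0; have F2 := Fi 1.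
have K1 : (u ^ k - u ^+ n) * (u ^ k - u ^- n) * eta 0 0 = 0.
  transitivity ((a 1 1 - u ^ k) * (a 0 0 * eta 0 0 + a 0 1 * eta 1 0 - u ^ k * eta 0 0)
    - a 0 1 * (a 1 0 * eta 0 0 + a 1 1 * eta 1 0 - u ^ k * eta 1 0)
    + eta 0 0 * (u ^ k * ((a 0 0 + a 1 1) - (u ^- n + u ^+ n)) + (u ^+ n * u ^- n - 1)
                 - ((a 0 0 * a 1 1 - a 0 1 * a 1 0) - 1))); first ring.
  rewrite F1 F2 htr' hlm hdet; ring.
have K2 : (u ^ k - u ^+ n) * (u ^ k - u ^- n) * eta 1 0 = 0.
  transitivity ((a 0 0 - u ^ k) * (a 1 0 * eta 0 0 + a 1 1 * eta 1 0 - u ^ k * eta 1 0)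
    - a 1 0 * (a 0 0 * eta 0 0 + a 0 1 * eta 1 0 - u ^ k * eta 0 0)
    + eta 1 0 * (u ^ k * ((a 0 0 + a 1 1) - (u ^- n + u ^+ n)) + (u ^+ n * u ^- n - 1)
                 - ((a 0 0 * a 1 1 - a 0 1 * a 1 0) - 1))); first ring.
  rewrite F1 F2 htr' hlm hdet; ring.
have Kp : (u ^ k - u ^+ n) * (u ^ k - u ^- n) = 0.
  case: (eqVneq (eta 0 0) 0) => [e1|e1].
    case: (eqVneq (eta 1 0) 0) => [e2|e2].
      exfalso; move/negP: eta0; apply; apply/eqP/matrixP => i j.
      rewrite (ord1 j) !mxE; case: (ord2 i) => ->; [exact: e1 | exact: e2].
    by move/eqP: K2; rewrite mulf_eq0 (negPf e2) orbF => /eqP.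
  by move/eqP: K1; rewrite mulf_eq0 (negPf e1) orbF => /eqP.
move/eqP: Kp; rewrite mulf_eq0 !subr_eq0 => /orP [/eqP hL|/eqP hL].
- left; apply: glider_mult G1 pe _.
  + apply/negP => /eqP h.
    have h' : a 0 0 = u ^+ n by move/eqP: h; rewrite addrC addr_eq0 oppF => /eqP.
    have := hb 0 0; rewrite h' barl => h''; move/eqP: hne; apply; exact: esym h''.
  + rewrite hL in F1.
    apply/eqP; rewrite -subr_eq0; apply/eqP.
    transitivity (- (a 0 0 * eta 0 0 + a 0 1 * eta 1 0 - u ^+ n * eta 0 0) + 2 * a 0 0 * eta 0 0); first ring.
    rewrite F1 two0; ring.
- right; apply: glider_mult G2 pe _.
  + apply/negP => /eqP h.
    have h' : a 0 0 = u ^- n by move/eqP: h; rewrite addrC addr_eq0 oppF => /eqP.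
    have := hb 0 0; rewrite h' barm => h''; move/eqP: hne; apply; exact: h''.
  + rewrite hL in F1.
    apply/eqP; rewrite -subr_eq0; apply/eqP.
    transitivity (- (a 0 0 * eta 0 0 + a 0 1 * eta 1 0 - u ^- n * eta 0 0) + 2 * a 0 0 * eta 0 0); first ring.
    rewrite F1 two0; ring.
Qed.
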